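(* Let $\kappa>0$, $u_0>0$, and let $u$ be the solution of $\frac{d}{dr}\big(u'/\sqrt{1+u'^2}\big)=\kappa u$, $u(0)=u_0$, $u'(0)=0$. Let $a>0$ and $0\le\gamma<\pi/2$ be such that $u$ is defined on $[0,a)$ and $\sin\psi(a)=\cos\gamma$, where $\sin\psi=u'/\sqrt{1+u'^2}$ (extended continuously to $r=a$). Then $$\frac{2(1-\sin\gamma)}{\kappa f(\gamma)}<u(a)-u_0<\frac{a(1-\sin\gamma)}{\cos\gamma},\qquad f(\gamma)=\frac{2\cos\gamma}{\kappa a}-\frac{a\tan\gamma}2+\frac a{2\cos^2\gamma}\Big(\frac\pi2-\gamma\Big).$$
   Context: $u$ is the profile of a $\kappa$-cylindrical capillary surface $z=u(x)$ between vertical plates $x=\pm a$ with contact angle $\gamma$. *)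

(* Defs.v *)
From Stdlib Require Import Reals.
From Coquelicot Require Import Coquelicot.
Open Scope R_scope.

Definition sin_psi (du : R -> R) (r : R) : R := du r / sqrt (1 + (du r) ^ 2).

Definition f_gamma (kappa a gamma : R) : R :=
  2 * cos gamma / (kappa * a) - a * tan gamma / 2
  + a / (2 * (cos gamma) ^ 2) * (PI / 2 - gamma).

(* Main.v *)
Require Import Defs.
From Stdlib Require Import Reals Lra Psatz.
From Coquelicot Require Import Coquelicot.
Open Scope R_scope.

Lemma mvt_aux (f df : R -> R) x y : x < y ->
  (forall t, x <= t <= y -> is_derive f t (df t)) ->
  exists c, x < c < y /\ f y - f x = df c * (y - x).
Proof.
  intros Hxy Hd.
  assert (pr1 : forall c, x < c < y -> derivable_pt f c).
  { intros c Hc. exists (df c). apply is_derive_Reals. apply Hd. lra. }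
  assert (pr2 : forall c, x < c < y -> derivable_pt id c).
  { intros c _. apply derivable_pt_id. }
  assert (Hc1 : forall c, x <= c <= y -> continuity_pt f c).
  { intros c Hc. apply derivable_continuous_pt. exists (df c).
    apply is_derive_Reals. apply Hd. lra. }
  assert (Hc2 : forall c, x <= c <= y -> continuity_pt id c).
  { intros c _. apply derivable_continuous_pt. apply derivable_pt_id. }
  destruct (MVT f id x y pr1 pr2 Hxy Hc1 Hc2) as [c [P Heq]].
  exists c. split; [exact P|].
  rewrite (derive_pt_eq_0 f c (df c) (pr1 c P)) in Heq.
  2:{ apply is_derive_Reals. apply Hd. lra. }
  rewrite (derive_pt_eq_0 id c 1 (pr2 c P)) in Heq.
  2:{ apply derivable_pt_lim_id. }
  unfold id in Heq. lra.
Qed.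

Lemma incr_strict (f df : R -> R) x y : x < y ->
  (forall t, x <= t <= y -> is_derive f t (df t)) ->
  (forall t, x < t < y -> 0 < df t) -> f x < f y.
Proof.
  intros Hxy Hd Hp. destruct (mvt_aux f df x y Hxy Hd) as [c [Hc Heq]].
  specialize (Hp c Hc). nra.
Qed.

Lemma incr_weak (f df : R -> R) x y : x <= y ->
  (forall t, x <= t <= y -> is_derive f t (df t)) ->
  (forall t, x < t < y -> 0 <= df t) -> f x <= f y.
Proof.
  intros Hxy Hd Hp. destruct (Rle_lt_or_eq_dec _ _ Hxy) as [H|H].
  - destruct (mvt_aux f df x y H Hd) as [c [Hc Heq]].
    specialize (Hp c Hc). nra.
  - subst; lra.
Qed.

Lemma ev_left (P : R -> Prop) a b : b < a -> (forall t, b < t < a -> P t) -> at_left a P.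
Proof.
  intros Hb H. assert (Hp : 0 < a - b) by lra.
  exists (mkposreal _ Hp). intros y Hy Hya. apply H. split; [|lra].
  unfold ball in Hy; simpl in Hy. unfold AbsRing_ball, abs, minus, plus, opp in Hy. simpl in Hy.
  apply Rabs_lt_between in Hy. lra.
Qed.

Lemma lim_id_left a : filterlim (fun t => t) (at_left a) (locally a).
Proof.
  intros P [eps H]. exists eps. intros y Hy _. apply H. exact Hy.
Qed.

Lemma lim_le (f g : R -> R) a L M b : b < a ->
  filterlim f (at_left a) (locally L) -> filterlim g (at_left a) (locally M) ->
  (forall t, b < t < a -> f t <= g t) -> L <= M.
Proof.
  intros Hb Hf Hg H.
  assert (HH := filterlim_le (F := at_left a) f g L M).
  simpl in HH. apply HH.
  - apply ev_left with b; auto.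
  - exact Hf.
  - exact Hg.
Qed.

Lemma lim_lin a k : filterlim (fun t => k * t) (at_left a) (locally (k * a)).
Proof.
  apply (filterlim_comp _ _ _ (fun t => t) (fun t => k * t) _ (@locally R_UniformSpace a)).
  - apply lim_id_left.
  - apply (ex_derive_continuous (fun t => k * t)). auto_derive. auto.
Qed.

Lemma lim_const a (k : R) : filterlim (fun t => k) (at_left a) (locally k).
Proof. apply filterlim_const. Qed.

Lemma sp_facts (d : R) : let s := d / sqrt (1 + d ^ 2) in
  0 < 1 - s ^ 2 /\ sqrt (1 - s ^ 2) = / sqrt (1 + d ^ 2) /\ d = s / sqrt (1 - s ^ 2)
  /\ (0 < d -> 0 < s) /\ (0 <= s -> 0 <= d).
Proof.
  intro s.
  assert (Hw : 0 < sqrt (1 + d ^ 2)) by (apply sqrt_lt_R0; nra).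
  assert (Hw2 : sqrt (1 + d ^ 2) ^ 2 = 1 + d ^ 2) by (rewrite pow2_sqrt; nra).
  assert (E : 1 - s ^ 2 = (/ sqrt (1 + d ^ 2)) ^ 2).
  { unfold s, Rdiv. rewrite Rpow_mult_distr, pow_inv, Hw2. field. nra. }
  assert (E2 : sqrt (1 - s ^ 2) = / sqrt (1 + d ^ 2)).
  { rewrite E. apply sqrt_pow2. left. apply Rinv_0_lt_compat. exact Hw. }
  split; [rewrite E; apply pow_lt; apply Rinv_0_lt_compat; exact Hw|].
  split; [exact E2|].
  split; [rewrite E2; unfold s; field; lra|].
  split.
  - intro. unfold s. apply Rdiv_lt_0_compat; lra.
  - intro H. unfold s in H. destruct (Rle_or_lt 0 d) as [|Hd]; auto.
    exfalso. assert (d / sqrt (1 + d ^ 2) < 0).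
    { unfold Rdiv. apply Rmult_neg_pos; auto. apply Rinv_0_lt_compat; lra. }
    lra.
Qed.

Lemma asin_le x y : -1 <= x -> x <= y -> y <= 1 -> asin x <= asin y.
Proof.
  intros H1 H2 H3. destruct (Rle_or_lt (asin x) (asin y)) as [|H]; auto.
  exfalso.
  pose proof (asin_bound x). pose proof (asin_bound y).
  assert (sin (asin y) < sin (asin x)).
  { apply sin_increasing_1; lra. }
  match goal with Hs : sin (asin y) < _ |- _ => rewrite !sin_asin in Hs by lra end. lra.
Qed.

Lemma asin_cos_g g : 0 <= g -> g < PI / 2 -> asin (cos g) = PI / 2 - g.
Proof.
  intros. rewrite <- sin_shift. apply asin_sin. lra.
Qed.

Lemma sqrt_cos2 g : 0 <= g -> g < PI / 2 -> sqrt (1 - cos g ^ 2) = sin g.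
Proof.
  intros. assert (sin g ^ 2 + cos g ^ 2 = 1) by (pose proof (sin2_cos2 g); unfold Rsqr in *; lra).
  replace (1 - cos g ^ 2) with (sin g ^ 2) by lra.
  apply sqrt_pow2. apply sin_ge_0; lra.
Qed.

Lemma is_derive_asin x : -1 < x < 1 -> is_derive asin x (1 / sqrt (1 - x ^ 2)).
Proof.
  intros H. apply is_derive_Reals.
  apply (derive_pt_eq_1 _ _ _ (derivable_pt_asin x H)).
  rewrite derive_pt_asin. unfold Rsqr. f_equal. f_equal. ring.
Qed.
Lemma lim_mult (f g : R -> R) a L M : filterlim f (at_left a) (locally L) -> filterlim g (at_left a) (locally M) ->
  filterlim (fun t => f t * g t) (at_left a) (locally (L * M)).
Proof.
  intros Hf Hg. apply (filterlim_comp_2 f g Rmult Hf Hg). apply (filterlim_mult L M).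
Qed.
Lemma lim_plus (f g : R -> R) a L M : filterlim f (at_left a) (locally L) -> filterlim g (at_left a) (locally M) ->
  filterlim (fun t => f t + g t) (at_left a) (locally (L + M)).
Proof.
  intros Hf Hg. apply (filterlim_comp_2 f g Rplus Hf Hg). apply (filterlim_plus L M).
Qed.
Lemma lim_uniq (f : R -> R) a L M : filterlim f (at_left a) (locally L) -> filterlim f (at_left a) (locally M) -> L = M.
Proof. intros. eapply (filterlim_locally_unique (F := at_left a) f); eauto. Qed.
Lemma lim_sq1 (s : R -> R) a c : filterlim s (at_left a) (locally c) ->
  filterlim (fun t => sqrt (1 - s t ^ 2)) (at_left a) (locally (sqrt (1 - c ^ 2))).
Proof.
  intros H. apply (filterlim_comp _ _ _ s (fun y => sqrt (1 - y ^ 2)) _ (locally c) _ H).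
  apply (continuous_comp (fun y => 1 - y ^ 2) sqrt).
  - assert (Hd : ex_derive (fun y : R => 1 - y ^ 2) c) by (auto_derive; auto).
    exact (ex_derive_continuous _ _ Hd).
  - apply continuous_sqrt.
Qed.
Lemma gmono x y : 0 <= x -> x < y -> y < 1 -> x / sqrt (1 - x ^ 2) < y / sqrt (1 - y ^ 2).
Proof.
  intros H1 H2 H3.
  assert (A : 0 < sqrt (1 - y ^ 2)) by (apply sqrt_lt_R0; nra).
  assert (B : sqrt (1 - y ^ 2) <= sqrt (1 - x ^ 2)) by (apply sqrt_le_1_alt; nra).
  apply Rle_lt_trans with (x / sqrt (1 - y ^ 2)).
  - unfold Rdiv. apply Rmult_le_compat_l; auto. apply Rinv_le_contravar; auto.
  - unfold Rdiv. apply Rmult_lt_compat_r; auto. apply Rinv_0_lt_compat; auto.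
Qed.
Lemma is_derive_eq (f g : R -> R) x l l' : is_derive f x l -> (forall t, f t = g t) -> l = l' -> is_derive g x l'.
Proof. intros H He Hl. subst. eapply is_derive_ext; [exact He| exact H]. Qed.

Ltac cq := unfold minus, plus, opp, zero, mult, scal; simpl; unfold minus, plus, opp, zero, mult, scal; simpl; unfold Rminus.

Lemma energy_deriv (u du s : R -> R) kappa r :
  is_derive u r (du r) -> is_derive s r (kappa * u r) -> 0 < 1 - s r ^ 2 ->
  is_derive (fun r => kappa * u r ^ 2 / 2 + sqrt (1 - s r ^ 2)) r
    (kappa * u r * du r - s r * kappa * u r / sqrt (1 - s r ^ 2)).
Proof.
  intros H1 H2 H3.
  assert (H4 : sqrt (1 - s r ^ 2) <> 0) by (apply Rgt_not_eq, sqrt_lt_R0; exact H3).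
  assert (A := is_derive_pow u 2 r _ H1).
  assert (B := is_derive_pow s 2 r _ H2).
  assert (C := is_derive_minus _ _ r _ _ (is_derive_const 1 r) B).
  assert (D := is_derive_sqrt _ r _ C H3).
  assert (E := is_derive_scal _ r (kappa / 2) _ A).
  assert (F := is_derive_plus _ _ r _ _ E D).
  eapply is_derive_eq; [apply F| |].
  - intro t. cq. field.
  - cq. unfold Rminus in H4. field. exact H4.
Qed.

Ltac req := cbv beta; match goal with |- ?x = ?y => change (@eq R x y) end; ring.

Lemma is_derive_lin' k x : is_derive (fun t => k * t) x k.
Proof. auto_derive; auto. ring. Qed.
Lemma is_derive_sub' (f g : R -> R) x df dg : is_derive f x df -> is_derive g x dg ->
  is_derive (fun t => f t - g t) x (df - dg).
Proof. intros A B. eapply is_derive_eq; [apply (is_derive_minus _ _ _ _ _ A B)| |]; intros; cq; ring. Qed.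
Lemma is_derive_add' (f g : R -> R) x df dg : is_derive f x df -> is_derive g x dg ->
  is_derive (fun t => f t + g t) x (df + dg).
Proof. intros A B. eapply is_derive_eq; [apply (is_derive_plus _ _ _ _ _ A B)| |]; intros; cq; ring. Qed.
Lemma is_derive_mul' (f g : R -> R) x df dg : is_derive f x df -> is_derive g x dg ->
  is_derive (fun t => f t * g t) x (df * g x + f x * dg).
Proof. intros A B. eapply is_derive_eq; [apply (is_derive_mult _ _ _ _ _ A B)| |]; intros; cq; try ring. Qed.
Lemma is_derive_id' x : is_derive (fun t => t) x 1.
Proof. auto_derive; auto. Qed.
Lemma is_derive_const' (k : R) x : is_derive (fun _ => k) x 0.
Proof. auto_derive; auto. Qed.
Lemma is_derive_scal' (k : R) (f : R -> R) x df : is_derive f x df -> is_derive (fun t => k * f t) x (k * df).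
Proof. intros A. eapply is_derive_eq; [apply (is_derive_mul' _ _ _ _ _ (is_derive_const' k x) A)| |]; intros; simpl; ring. Qed.
Lemma deriv_circ a c t : 0 < a -> 0 < c -> 0 < 1 - (t*c/a)^2 ->
  is_derive (fun t => (a/c) * (1 - sqrt (1 - (t*c/a)^2))) t ((t*c/a) / sqrt (1 - (t*c/a)^2)).
Proof.
  intros Ha Hc H. assert (0 < sqrt (1 - (t*c/a)^2)) by (apply sqrt_lt_R0; auto).
  auto_derive. auto. replace (1 + - (t * c * / a * (t * c * / a * 1))) with (1 - (t*c/a)^2) by (unfold Rdiv; ring). field. split; lra.
Qed.
Lemma deriv_K a c t : 0 < a -> 0 < c -> -1 < t*c/a < 1 ->
  is_derive (fun t => a^2/(2*c^2) * (asin (t*c/a) - (t*c/a) * sqrt (1 - (t*c/a)^2))) t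
     (t * ((t*c/a) / sqrt (1 - (t*c/a)^2))).
Proof.
  intros Ha Hc H.
  assert (H1 : 0 < 1 - (t*c/a)^2) by nra.
  set (S := sqrt (1 - (t*c/a)^2)).
  assert (HS : 0 < S) by (apply sqrt_lt_R0; auto).
  assert (HS2 : S * S = 1 - (t*c/a)^2) by (apply sqrt_sqrt; lra).
  assert (A : is_derive (fun t => asin (t*c/a)) t ((c/a) * (1 / S))).
  { apply (is_derive_comp asin (fun t => t*c/a) t (1/S) (c/a)).
    - apply is_derive_asin. auto.
    - auto_derive; auto. field. lra. }
  assert (B : is_derive (fun t => (t*c/a) * sqrt (1 - (t*c/a)^2)) t
                ((c/a) * S - (t*c/a)^2 * (c/a) / S)).
  { auto_derive. auto. fold S.
    replace (1 + - (t * c * / a * (t * c * / a * 1))) with (1 - (t*c/a)^2) by (unfold Rdiv; ring).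
    fold S. field. split; lra. }
  eapply is_derive_eq; [apply is_derive_scal'; apply is_derive_sub'; [exact A | exact B]| intro; reflexivity|].
  set (x := t*c/a) in *.
  assert (E : a ^ 2 / (2 * c ^ 2) * (c / a * (1 / S) - (c / a * S - x ^ 2 * (c / a) / S)) - t * (x / S)
              = a ^ 2 / (2 * c ^ 2) * (c / a) * (1 - x^2 - S * S) / S).
  { unfold x. field. repeat split; lra. }
  rewrite HS2 in E. change (x ^ 2) with (x ^ 2) in E.
  assert (E2 : a ^ 2 / (2 * c ^ 2) * (c / a) * (1 - x ^ 2 - (1 - x ^ 2)) / S = 0) by (field; lra).
  lra.
Qed.

Theorem mainTheorem12 (kappa u0 a gamma : R) (u du : R -> R) :
  0 < kappa -> 0 < u0 -> 0 < a -> 0 <= gamma -> gamma < PI / 2 ->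
  (forall r, 0 <= r < a -> is_derive u r (du r)) ->
  (forall r, 0 <= r < a -> is_derive (sin_psi du) r (kappa * u r)) ->
  u 0 = u0 -> du 0 = 0 ->
  filterlim (sin_psi du) (at_left a) (locally (cos gamma)) ->
  filterlim u (at_left a) (locally (u a)) ->
  2 * (1 - sin gamma) / (kappa * f_gamma kappa a gamma) < u a - u0
  < a * (1 - sin gamma) / cos gamma.
Proof.
  intros Hk Hu0 Ha Hg0 Hg1 Hdu Hds Hu00 Hdu0 Hlims Hlimu.
  set (s := sin_psi du) in *.
  assert (SF : forall r, 0 < 1 - s r ^ 2 /\ du r = s r / sqrt (1 - s r ^ 2)).
  { intro r. destruct (sp_facts (du r)) as [A [_ [C _]]]. split; [exact A | exact C]. }
  assert (SQ : forall r, 0 < sqrt (1 - s r ^ 2)).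
  { intro r. apply sqrt_lt_R0. apply SF. }
  assert (Hs0 : s 0 = 0).
  { unfold s, sin_psi. rewrite Hdu0. unfold Rdiv. ring. }
  set (c := cos gamma) in *.
  assert (Hc : 0 < c) by (apply cos_gt_0; lra).
  assert (Hc1 : c <= 1) by (apply COS_bound).
  set (sg := sin gamma) in *.
  assert (Hsg : sqrt (1 - c ^ 2) = sg) by (apply sqrt_cos2; auto).
  assert (Hsg0 : 0 <= sg) by (apply sin_ge_0; lra).
  assert (Hsgc : sg ^ 2 + c ^ 2 = 1).
  { unfold sg, c. pose proof (sin2_cos2 gamma). unfold Rsqr in *. lra. }
  assert (Hsg1 : sg < 1) by nra.
  assert (HE : forall r, 0 <= r < a ->
            kappa * u r ^ 2 / 2 + sqrt (1 - s r ^ 2) = kappa * u0 ^ 2 / 2 + 1).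
  { intros r Hr.
    destruct (Req_dec r 0) as [->|Hr0].
    { rewrite Hs0, Hu00. replace (1 - 0 ^ 2) with 1 by ring. rewrite sqrt_1. ring. }
    destruct (mvt_aux (fun r => kappa * u r ^ 2 / 2 + sqrt (1 - s r ^ 2)) (fun _ => 0) 0 r)
      as [z [Hz Heq]]; [lra| |].
    - intros t Ht. eapply is_derive_eq.
      + apply (energy_deriv u du s kappa t); [apply Hdu; lra | apply Hds; lra | apply SF].
      + intro; reflexivity.
      + destruct (SF t) as [_ E]. change (kappa * u t * du t - s t * kappa * u t / sqrt (1 - s t ^ 2) = (0:R)). rewrite E. field. apply Rgt_not_eq, SQ.
    - cbv beta in Heq. rewrite Hs0, Hu00 in Heq. replace (1 - 0 ^ 2) with 1 in Heq by ring.
      rewrite sqrt_1 in Heq. lra. }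
  assert (Hsq : forall r, 0 <= r < a -> u0 ^ 2 <= u r ^ 2).
  { intros r Hr. specialize (HE r Hr).
    assert (sqrt (1 - s r ^ 2) <= 1).
    { apply Rle_trans with (sqrt 1); [apply sqrt_le_1_alt; nra | rewrite sqrt_1; lra]. }
    nra. }
  assert (Hpos : forall r, 0 <= r < a -> u0 <= u r).
  { intros r Hr.
    destruct (Rlt_or_le 0 (u r)) as [H|H].
    - specialize (Hsq r Hr). nra.
    - exfalso.
      destruct (Req_dec (u r) 0) as [H0|H0].
      { specialize (Hsq r Hr). rewrite H0 in Hsq. nra. }
      assert (Hr0 : 0 < r).
      { destruct (Req_dec r 0) as [->|]; [rewrite Hu00 in H; lra | lra]. }
      destruct (Ranalysis5.IVT_interv (fun t => - u t) 0 r) as [z [Hz Hzv]].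
      + intros t Ht. apply continuity_pt_opp. apply derivable_continuous_pt.
        exists (du t). apply is_derive_Reals. apply Hdu. lra.
      + exact Hr0.
      + rewrite Hu00. lra.
      + lra.
      + assert (u z = 0) by lra. specialize (Hsq z ltac:(lra)). rewrite H1 in Hsq. nra. }
  assert (Hup : forall r, 0 <= r < a -> 0 < u r) by (intros r Hr; specialize (Hpos r Hr); lra).
  assert (Hsinc : forall x y, 0 <= x -> x < y -> y < a -> s x < s y).
  { intros x y Hx Hxy Hy. apply (incr_strict s (fun t => kappa * u t)); auto.
    - intros t Ht. apply Hds. lra.
    - intros t Ht. specialize (Hup t ltac:(lra)). nra. }
  assert (Hspos : forall r, 0 < r < a -> 0 < s r).
  { intros r Hr. rewrite <- Hs0. apply Hsinc; lra. }
  assert (Hdupos : forall r, 0 < r < a -> 0 < du r).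
  { intros r Hr. destruct (SF r) as [_ E]. rewrite E.
    apply Rdiv_lt_0_compat; [apply Hspos; auto | apply SQ]. }
  assert (Hs1 : forall r, s r < 1) by (intro r; destruct (SF r); nra).
  assert (HF6 : kappa * u0 * a <= c).
  { apply (lim_le (fun t => (kappa*u0) * t) s a _ _ 0 Ha (lim_lin a (kappa*u0)) Hlims).
    intros t Ht.
    assert (H := incr_weak (fun t => s t - kappa*u0*t) (fun t => kappa * u t - kappa*u0) 0 t
                  ltac:(lra)).
    cbv beta in H. rewrite Hs0 in H.
    enough (0 - kappa * u0 * 0 <= s t - kappa * u0 * t) by lra.
    apply H.
    - intros z Hz. apply is_derive_sub'; [apply Hds; lra | apply is_derive_lin'].
    - intros z Hz. specialize (Hpos z ltac:(lra)). nra. }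
  assert (HF7 : forall r, 0 < r < a -> 0 < r * (kappa * u r) - s r).
  { intros r Hr.
    assert (H := incr_strict (fun t => t * (kappa * u t) - s t) (fun t => t * (kappa * du t)) 0 r
                  ltac:(lra)).
    cbv beta in H. rewrite Hs0 in H. replace (0 * (kappa * u 0) - 0) with 0 in H by ring.
    apply H.
    - intros z Hz. eapply is_derive_eq.
      + apply is_derive_sub'; [apply is_derive_mul'; [apply is_derive_id'|]|apply Hds; lra].
        apply is_derive_scal'. apply Hdu. lra.
      + intro; reflexivity.
      + req.
    - intros z Hz. specialize (Hdupos z ltac:(lra)). cbv beta. apply Rmult_lt_0_compat; [lra|apply Rmult_lt_0_compat; lra]. }
  assert (HQ : forall x y, 0 < x -> x < y -> y < a -> s x / x < s y / y).
  { intros x y Hx Hxy Hy.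
    apply (incr_strict (fun t => s t / t) (fun t => (kappa * u t * t - s t * 1) / t ^ 2)); auto.
    - intros t Ht. apply is_derive_div; [apply Hds; lra | apply is_derive_id' | lra].
    - intros t Ht. cbv beta. apply Rdiv_lt_0_compat; [|apply pow_lt; lra].
      specialize (HF7 t ltac:(lra)). lra. }
  assert (HF9 : forall r, 0 < r < a -> s r < r * c / a).
  { intros r Hr. set (r' := (r + a) / 2).
    assert (H1 : s r / r < s r' / r') by (apply HQ; unfold r'; lra).
    assert (H2 : s r' / r' * a <= c).
    { apply (lim_le (fun t => (s r' / r') * t) s a _ _ r' ltac:(unfold r'; lra) (lim_lin a _) Hlims).
      intros t Ht. assert (H3 : s r' / r' < s t / t) by (apply HQ; unfold r' in *; lra).
      assert (0 < t) by (unfold r' in *; lra).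
      apply Rmult_lt_compat_r with (r := t) in H3; auto.
      replace (s t / t * t) with (s t) in H3 by (field; lra). lra. }
    assert (H4 : s r / r < c / a).
    { apply Rlt_le_trans with (s r' / r'); auto.
      apply Rmult_le_reg_r with a; auto. replace (c / a * a) with c by (field; lra). exact H2. }
    apply Rmult_lt_compat_r with (r := r) in H4; [|lra].
    replace (s r / r * r) with (s r) in H4 by (field; lra).
    replace (r * c / a) with (c / a * r) by (field; lra). exact H4. }
  assert (HEa : kappa * u a ^ 2 / 2 + sg = kappa * u0 ^ 2 / 2 + 1).
  { rewrite <- Hsg.
    assert (L1 := lim_sq1 s a c Hlims).
    assert (L2 : filterlim (fun t => (kappa * u0 ^ 2 / 2 + 1) + (- kappa / 2) * (u t * u t)) (at_left a)
                  (locally ((kappa * u0 ^ 2 / 2 + 1) + (- kappa / 2) * (u a * u a)))).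
    { apply lim_plus; [apply lim_const|]. apply lim_mult; [apply lim_const|]. apply lim_mult; auto. }
    assert (L3 : filterlim (fun t => sqrt (1 - s t ^ 2)) (at_left a)
                  (locally ((kappa * u0 ^ 2 / 2 + 1) + (- kappa / 2) * (u a * u a)))).
    { eapply filterlim_ext_loc; [|apply L2].
      apply ev_left with 0; auto. intros t Ht. specialize (HE t ltac:(lra)). cbv beta. nra. }
    assert (HH := lim_uniq _ _ _ _ L1 L3). nra. }
  assert (Hx1 : forall t, 0 <= t < a -> 0 <= t*c/a /\ t*c/a < 1 /\ t*c/a <= c).
  { intros t Ht. assert (E : t*c/a = c * (t / a)) by (field; lra).
    assert (0 <= t / a) by (apply Rdiv_le_0_compat; lra).
    assert (t / a < 1).
    { apply Rmult_lt_reg_r with a; auto. replace (t / a * a) with t by (field; lra). lra. }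
    rewrite E. repeat split; nra. }
  assert (Hgap : forall t, 0 < t < a -> 0 < (t*c/a) / sqrt (1 - (t*c/a)^2) - du t).
  { intros t Ht. destruct (SF t) as [_ E]. rewrite E.
    destruct (Hx1 t ltac:(lra)) as [X1 [X2 X3]].
    assert (s t / sqrt (1 - s t ^ 2) < t * c / a / sqrt (1 - (t * c / a) ^ 2)).
    { apply gmono; [left; apply Hspos; auto | apply HF9; auto | auto]. }
    lra. }
  set (Dn := fun t => (a/c) * (1 - sqrt (1 - (t*c/a)^2)) - u t).
  assert (HDd : forall t, 0 <= t < a -> is_derive Dn t ((t*c/a) / sqrt (1 - (t*c/a)^2) - du t)).
  { intros t Ht. destruct (Hx1 t Ht) as [X1 [X2 X3]]. apply is_derive_sub'.
    - apply deriv_circ; auto. nra.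
    - apply Hdu; auto. }
  assert (HD0 : Dn 0 = - u0).
  { unfold Dn. rewrite Hu00. replace (1 - (0 * c / a) ^ 2) with 1 by (field; lra).
    rewrite sqrt_1. ring. }
  assert (HD1 : Dn 0 < Dn (a/2)).
  { apply (incr_strict Dn (fun t => (t*c/a) / sqrt (1 - (t*c/a)^2) - du t) 0 (a/2)); [lra | intros; apply HDd; lra | intros; apply Hgap; lra]. }
  assert (HD2 : forall t, a/2 < t < a -> Dn (a/2) <= Dn t).
  { intros t Ht. apply (incr_weak Dn (fun t => (t*c/a) / sqrt (1 - (t*c/a)^2) - du t) (a/2) t); [lra | intros; apply HDd; lra | intros; left; apply Hgap; lra]. }
  assert (Hupa : u a <= (a/c) * (1 - sg) - Dn (a/2)).
  { apply (lim_le u (fun _ => (a/c) * (1 - sg) - Dn (a/2)) a _ _ (a/2) ltac:(lra) Hlimu (lim_const _ _)).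
    intros t Ht. specialize (HD2 t Ht). destruct (Hx1 t ltac:(lra)) as [X1 [X2 X3]].
    assert (sg <= sqrt (1 - (t*c/a)^2)).
    { rewrite <- Hsg. apply sqrt_le_1_alt. nra. }
    assert (0 < a / c) by (apply Rdiv_lt_0_compat; lra).
    unfold Dn in HD2 |- *. nra. }
  set (K := fun t => a^2/(2*c^2) * (asin (t*c/a) - (t*c/a) * sqrt (1 - (t*c/a)^2))).
  set (Nn := fun t => K t - t * u t + s t / kappa).
  assert (HNd : forall t, 0 <= t < a -> is_derive Nn t (t * ((t*c/a) / sqrt (1 - (t*c/a)^2) - du t))).
  { intros t Ht. destruct (Hx1 t Ht) as [X1 [X2 X3]].
    assert (AK := deriv_K a c t Ha Hc ltac:(lra)).
    assert (AU := is_derive_mul' (fun t => t) u t _ _ (is_derive_id' t) (Hdu t Ht)).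
    assert (AS := is_derive_scal' (/ kappa) s t _ (Hds t Ht)).
    eapply is_derive_eq; [apply (is_derive_add' _ _ _ _ _ (is_derive_sub' _ _ _ _ _ AK AU) AS)| |].
    - intro z. unfold Nn, K. cbv beta; match goal with |- ?x = ?y => change (@eq R x y) end; field; lra.
    - cbv beta; match goal with |- ?x = ?y => change (@eq R x y) end; field; repeat split; try lra; apply Rgt_not_eq, sqrt_lt_R0; nra. }
  assert (HN0 : Nn 0 = 0).
  { unfold Nn, K. rewrite Hs0. replace (0 * c / a) with 0 by (field; lra). rewrite asin_0.
    field. lra. }
  assert (HN1 : 0 < Nn (a/2)).
  { rewrite <- HN0. apply (incr_strict Nn (fun t => t * ((t*c/a) / sqrt (1 - (t*c/a)^2) - du t)) 0 (a/2)); [lra | intros; apply HNd; lra |].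
    intros t Ht. cbv beta. apply Rmult_lt_0_compat; [lra | apply Hgap; lra]. }
  assert (HN2 : forall t, a/2 < t < a -> Nn (a/2) <= Nn t).
  { intros t Ht. apply (incr_weak Nn (fun t => t * ((t*c/a) / sqrt (1 - (t*c/a)^2) - du t)) (a/2) t); [lra | intros; apply HNd; lra |].
    intros z Hz. cbv beta. left. apply Rmult_lt_0_compat; [lra | apply Hgap; lra]. }
  set (Kmax := a^2/(2*c^2) * ((PI/2 - gamma) - c * sg)).
  assert (HKle : forall t, 0 <= t < a -> K t <= Kmax).
  { intros t Ht. destruct (Hx1 t Ht) as [X1 [X2 X3]].
    set (Kt := fun p => a^2/(2*c^2) * (p - sin p * cos p)).
    assert (E1 : K t = Kt (asin (t*c/a))).
    { unfold K, Kt. rewrite sin_asin by lra. rewrite cos_asin by lra. unfold Rsqr.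
      replace ((t*c/a)^2) with (t * c / a * (t * c / a)) by ring. reflexivity. }
    assert (E2 : Kmax = Kt (PI/2 - gamma)).
    { unfold Kmax, Kt. rewrite sin_shift, cos_shift. reflexivity. }
    rewrite E1, E2.
    assert (A1 : asin (t*c/a) <= PI/2 - gamma).
    { rewrite <- (asin_cos_g gamma) by auto. apply asin_le; [lra | exact X3 | exact Hc1]. }
    apply (incr_weak Kt (fun p => a^2/(2*c^2) * (2 * sin p ^ 2))); auto.
    - intros p _. unfold Kt. auto_derive; auto.
      assert (HH : cos p ^ 2 = 1 - sin p ^ 2) by (pose proof (sin2_cos2 p); unfold Rsqr in *; nra).
      replace (1 + - (1 * cos p * cos p + sin p * (1 * - sin p))) with (2 * sin p ^ 2)
        by (replace (1 * cos p * cos p) with (cos p ^ 2) by ring; rewrite HH; ring).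
      field. lra.
    - intros p _. apply Rmult_le_pos; [|nra]. apply Rdiv_le_0_compat; nra. }
  assert (Hloa : a * u a <= Kmax + c / kappa - Nn (a/2)).
  { apply (lim_le (fun t => t * u t) (fun t => (Kmax - Nn (a/2)) + (/ kappa) * s t) a _ _ (a/2) ltac:(lra)).
    - apply lim_mult; [apply lim_id_left | exact Hlimu].
    - replace (Kmax + c / kappa - Nn (a / 2)) with ((Kmax - Nn (a/2)) + (/ kappa) * c) by (field; lra).
      apply lim_plus; [apply lim_const|]. apply lim_mult; [apply lim_const | exact Hlims].
    - intros t Ht. specialize (HN2 t Ht). specialize (HKle t ltac:(lra)).
      assert (E : Nn t = K t - t * u t + s t / kappa) by reflexivity. cbv beta. unfold Rdiv in E. lra. }
  assert (HUu0 : u0 <= u a).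
  { apply (lim_le (fun _ => u0) u a _ _ 0 Ha (lim_const _ _) Hlimu). intros t Ht. apply Hpos; lra. }
  assert (HF : a * f_gamma kappa a gamma = 2 * c / kappa + Kmax).
  { unfold f_gamma, Kmax, tan. fold c sg. field. repeat split; lra. }
  set (U := u a) in *.
  assert (Hsum : U + u0 < f_gamma kappa a gamma).
  { assert (a * u0 <= c / kappa).
    { apply Rmult_le_reg_r with kappa; auto. replace (c / kappa * kappa) with c by (field; lra). nra. }
    apply Rmult_lt_reg_l with a; auto. rewrite HF. nra. }
  assert (HFp : 0 < f_gamma kappa a gamma) by lra.
  assert (HE2 : 2 * (1 - sg) = kappa * (U - u0) * (U + u0)) by nra.
  assert (HUgt : u0 < U).
  { destruct (Rle_lt_or_eq_dec _ _ HUu0) as [|E]; auto. rewrite <- E in HE2. nra. }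
  split.
  - rewrite HE2.
    set (F := f_gamma kappa a gamma) in *.
    replace (kappa * (U - u0) * (U + u0) / (kappa * F)) with ((U - u0) * ((U + u0) / F)) by (field; lra).
    assert (Hq : (U + u0) / F < 1).
    { apply Rmult_lt_reg_r with F; auto. replace ((U + u0) / F * F) with (U + u0) by (field; lra). lra. }
    nra.
  - replace (a * (1 - sg) / c) with ((a / c) * (1 - sg)) by (field; lra). lra.
Qed.
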